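(* Let $E$ be a finite nonempty set, $X\in\mathcal{X}(2)\setminus\mathcal{X}^*(2)$, and let $f:2^E\to\mathbb{N}$ and $S,T\subseteq E$ satisfy: $X=\mathbb{B}_f(2)$; for every $U\subseteq E$ there is $\vec x\in\mathbb{B}_f(2)$ with $x(U)=f(U)$; and $f(S)=f(T)=f(S\cap T)=1$, $f(S\cup T)=2$. Then for every $\vec x\in\mathbb{B}_f(2)$ with $\mathrm{supp}(\vec x)\subseteq S\cup T$ we have $\mathrm{supp}(\vec x)\cap(S\cap T)=\emptyset$.
   Context: $\mathbb{N}=\{0,1,2,\dots\}$; $x(U)=\sum_{e\in U}x_e$; $\mathrm{supp}(\vec x)=\{e: x_e\neq0\}$. For $f:2^E\to\mathbb{N}$, $\mathbb{B}_f(d)=\{\vec x\in\mathbb{N}^E: x(U)\le f(U)\ \forall U\subseteq E,\ x(E)=d\}$. $f$ is strictly positive if $f(U)>0$ for all nonempty $U$, normalized if $f(\emptyset)=0$, monotonic if $f(U)\le f(V)$ for $U\subseteq V$. $\mathcal{X}(d)=\{\mathbb{B}_f(d): f \text{ strictly positive, normalized, monotonic}\}$, $\mathcal{X}^*(d)=\{\mathbb{B}_f(d): f\text{ strictly positive, normalized, monotonic, submodular}\}$. *)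

(* Defs.v *)
From mathcomp Require Import all_boot.
Set Implicit Arguments. Unset Strict Implicit. Unset Printing Implicit Defensive.

Section Defs.
Variable E : finType.

Definition xsum (x : {ffun E -> nat}) (U : {set E}) : nat := \sum_(e in U) x e.

Definition supp (x : {ffun E -> nat}) : {set E} := [set e | x e != 0].

Definition Bf (f : {set E} -> nat) (d : nat) : pred {ffun E -> nat} :=
  fun x => [forall U : {set E}, xsum x U <= f U] && (xsum x [set: E] == d).

Definition strictly_positive (f : {set E} -> nat) : Prop :=
  forall U : {set E}, U != set0 -> 0 < f U.
Definition normalized (f : {set E} -> nat) : Prop := f set0 = 0.
Definition monotonic (f : {set E} -> nat) : Prop :=
  forall U V : {set E}, U \subset V -> f U <= f V.
Definition submodular (f : {set E} -> nat) : Prop :=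
  forall U V : {set E}, f (U :|: V) + f (U :&: V) <= f U + f V.

Definition in_calX (d : nat) (X : pred {ffun E -> nat}) : Prop :=
  exists f, [/\ strictly_positive f, normalized f, monotonic f & X =1 Bf f d].

Definition in_calXstar (d : nat) (X : pred {ffun E -> nat}) : Prop :=
  exists f, [/\ strictly_positive f, normalized f, monotonic f, submodular f
              & X =1 Bf f d].
End Defs.

(* Main.v *)
Require Import Defs.
From mathcomp Require Import all_boot.
From mathcomp Require Import zify.
From Stdlib Require Import Lia.

Theorem lemma6p2 (E : finType) (X : pred {ffun E -> nat})
  (f : {set E} -> nat) (S T : {set E}) :
  0 < #|E| ->
  in_calX 2 X -> ~ in_calXstar 2 X ->
  X =1 Bf f 2 ->
  (forall U : {set E}, exists x, Bf f 2 x /\ xsum x U = f U) ->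
  f S = 1 -> f T = 1 -> f (S :&: T) = 1 -> f (S :|: T) = 2 ->
  forall x : {ffun E -> nat}, Bf f 2 x -> supp x \subset S :|: T ->
  supp x :&: (S :&: T) = set0.
Proof.
move=> _ _ _ _ _ fS fT _ _ x /andP[/forallP hB /eqP hE] hsub.
have hS := hB S; have hT := hB T; rewrite fS in hS; rewrite fT in hT.
have hU : xsum x [set: E] = xsum x (S :|: T).
  rewrite /xsum !(big_mkcond (fun e => e \in _)); apply: eq_bigr => e _; rewrite inE /=.
  case: ifP => // he; apply/eqP; apply/negPn/negP => hx.
  have : e \in supp x by rewrite inE.
  by move/(subsetP hsub); rewrite he.
have key : xsum x (S :|: T) + xsum x (S :&: T) = xsum x S + xsum x T.
  rewrite /xsum !(big_mkcond (fun e => e \in _)) -!big_split /=.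
  apply: eq_bigr => e _; rewrite !inE.
  by case: (e \in S); case: (e \in T); rewrite /= ?addn0 ?add0n.
have h0 : xsum x (S :&: T) = 0 by lia.
move: h0; rewrite /xsum => /eqP; rewrite sum_nat_eq0 => /forallP h0.
apply/setP => e; rewrite !inE.
have := h0 e; rewrite !inE.
by case: (e \in S); case: (e \in T); rewrite /= ?andbF // => /eqP ->.
Qed.
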